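(* Let $N'E_+(x,t):=\frac{\sqrt x}{2t}\exp\!\left(-\frac{x^2}{4t}\right)$ for $x,t>0$ and $(N'E_+*_tN'E_+)(x,t):=\int_0^tN'E_+(x,t-\tilde t)\,N'E_+(x,\tilde t)\,d\tilde t$. Then $$\int_0^1(N'E_+*_tN'E_+)(x,t)\,dx=\frac12+O(t^\infty),\qquad t\to0^+,$$ i.e. the difference is $O(t^N)$ for every $N$. *)

(* Defs.v *)
From Stdlib Require Import Reals ClassicalEpsilon.
Open Scope R_scope.

(* N'E_+(x,t) = sqrt x / (2t) * exp(-x^2/(4t)) for t > 0; extended by 0 for
   t <= 0 (its limit as t -> 0+ for x > 0; only used at endpoints of the
   time integration, where it does not affect the Riemann integral). *)
Definition NEp (x t : R) : R :=
  if Rlt_dec 0 t then sqrt x / (2 * t) * exp (- (x ^ 2) / (4 * t)) else 0.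

(* Riemann integral as a total function: the Stdlib RiemannInt when f is
   Riemann integrable on [a,b], and 0 otherwise (integrability is asserted
   separately in the theorem, so the default value is never relied upon). *)
Definition RInt (f : R -> R) (a b : R) : R :=
  match excluded_middle_informative (inhabited (Riemann_integrable f a b)) with
  | left H =>
      RiemannInt (proj1_sig (constructive_indefinite_description
                    (fun _ : Riemann_integrable f a b => True)
                    (match H with inhabits p => ex_intro _ p I end)))
  | right _ => 0
  end.

Definition NEconv (x t : R) : R :=
  RInt (fun s => NEp x (t - s) * NEp x s) 0 t.

(* Main.v *)
Require Import Defs.
From Stdlib Require Import Reals Lra Psatz ClassicalEpsilon.
From Coquelicot Require Import Coquelicot.
Open Scope R_scope.

Lemma RInt_bridge f a b : ex_RInt f a b -> Defs.RInt f a b = RInt f a b.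
Proof.
  intros H. unfold Defs.RInt.
  destruct excluded_middle_informative as [H1|H1].
  - symmetry. apply RInt_Reals.
  - exfalso. apply H1. constructor. now apply ex_RInt_Reals_0.
Qed.

Lemma expm_mul w : exp (- w) * exp w = 1.
Proof. rewrite <- exp_plus. replace (-w + w) with 0 by ring. apply exp_0. Qed.

Lemma e1 w : 0 <= w -> exp (- w) * (1 + w) <= 1.
Proof.
  intros Hw. pose proof (exp_ineq1_le w). pose proof (expm_mul w).
  pose proof (exp_pos (-w)). nra.
Qed.

Lemma e2 w : 0 <= w -> w ^ 2 * exp (- w) <= 4.
Proof.
  intros Hw. pose proof (exp_ineq1_le (w/2)).
  assert (E : exp w = exp (w/2) * exp (w/2)) by (rewrite <- exp_plus; f_equal; field).
  pose proof (expm_mul w). pose proof (exp_pos (-w)). pose proof (exp_pos (w/2)).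
  assert (w^2 <= 4 * exp w) by nra. nra.
Qed.

Lemma deriv_cont f x l : is_derive f x l -> continuity_pt f x.
Proof.
  intros H. apply continuity_pt_filterlim. apply (ex_derive_continuous (V:=R_NormedModule)).
  exists l. exact H.
Qed.

Lemma lip f df lo hi M :
  (forall z, lo <= z <= hi -> is_derive f z (df z)) ->
  (forall z, lo <= z <= hi -> Rabs (df z) <= M) ->
  forall x y, lo <= x <= hi -> lo <= y <= hi -> Rabs (f y - f x) <= M * Rabs (y - x).
Proof.
  intros Hd Hb x y Hx Hy.
  assert (Hin : forall z, Rmin x y <= z <= Rmax x y -> lo <= z <= hi).
  { intros z Hz. unfold Rmin, Rmax in Hz. destruct (Rle_dec x y); lra. }
  destruct (MVT_gen f x y df) as [c [Hc E]].
  - intros z Hz. apply Hd, Hin. lra.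
  - intros z Hz. apply (deriv_cont _ _ (df z)). apply Hd, Hin. lra.
  - rewrite E, Rabs_mult. apply Rmult_le_compat_r. apply Rabs_pos. apply Hb, Hin, Hc.
Qed.

Lemma taylor2 f df d2f lo hi M :
  (forall z, lo <= z <= hi -> is_derive f z (df z)) ->
  (forall z, lo <= z <= hi -> is_derive df z (d2f z)) ->
  (forall z, lo <= z <= hi -> Rabs (d2f z) <= M) ->
  forall x y, lo <= x <= hi -> lo <= y <= hi ->
  Rabs (f y - f x - (y - x) * df x) <= M * (y - x) ^ 2.
Proof.
  intros H1 H2 H3 x y Hx Hy.
  set (lo' := Rmin x y). set (hi' := Rmax x y).
  assert (Hin : forall z, lo' <= z <= hi' -> lo <= z <= hi).
  { intros z Hz. unfold lo', hi', Rmin, Rmax in Hz. destruct (Rle_dec x y); lra. }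
  assert (Hxin : lo' <= x <= hi') by (unfold lo', hi', Rmin, Rmax; destruct (Rle_dec x y); lra).
  assert (Hyin : lo' <= y <= hi') by (unfold lo', hi', Rmin, Rmax; destruct (Rle_dec x y); lra).
  pose proof (lip (fun z => f z - z * df x) (fun z => df z - df x) lo' hi' (M * Rabs (y - x))) as L.
  assert (HM : 0 <= M). { pose proof (H3 x Hx). pose proof (Rabs_pos (d2f x)). lra. }
  replace (f y - f x - (y - x) * df x) with ((f y - y * df x) - (f x - x * df x)) by ring.
  replace (M * (y - x) ^ 2) with (M * Rabs (y - x) * Rabs (y - x)).
  2:{ rewrite <- (pow2_abs (y-x)). ring. }
  apply L; auto.
  - intros z Hz.
    assert (Hl : is_derive (fun z => z * df x) z (df x)) by (auto_derive; [trivial | ring]).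
    apply (is_derive_minus (fun z => f z) (fun z => z * df x)). apply H1, Hin, Hz. exact Hl.
  - intros z Hz. pose proof (lip df d2f lo hi M H2 H3 x z Hx (Hin z Hz)).
    eapply Rle_trans. apply H. apply Rmult_le_compat_l. auto.
    unfold lo', hi', Rmin, Rmax in Hz. destruct (Rle_dec x y); unfold Rabs; repeat destruct Rcase_abs; lra.
Qed.

Lemma deriv_from_bound F y l r C : 0 < r -> 0 <= C ->
  (forall h, h <> 0 -> Rabs h < r -> Rabs (F (y + h) - F y - h * l) <= C * Rabs h * sqrt (Rabs h)) ->
  is_derive F y l.
Proof.
  intros Hr HC H. apply is_derive_Reals. intros eps Heps.
  set (e1 := eps / (C + 1)).
  assert (He1 : 0 < e1) by (unfold e1; apply Rdiv_lt_0_compat; lra).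
  assert (Hd : 0 < Rmin r (e1 ^ 2)) by (apply Rmin_pos; nra).
  exists (mkposreal _ Hd). intros h Hh0 Hh. simpl in Hh.
  assert (Hh1 : Rabs h < r) by (eapply Rlt_le_trans; [apply Hh| apply Rmin_l]).
  assert (Hh2 : Rabs h < e1 ^ 2) by (eapply Rlt_le_trans; [apply Hh| apply Rmin_r]).
  assert (Hs : sqrt (Rabs h) < e1).
  { rewrite <- (sqrt_pow2 e1) by lra. apply sqrt_lt_1_alt. split; [apply Rabs_pos|exact Hh2]. }
  pose proof (H h Hh0 Hh1) as B.
  assert (Ha : 0 < Rabs h) by (apply Rabs_pos_lt; exact Hh0).
  replace ((F (y + h) - F y) / h - l) with ((F (y + h) - F y - h * l) / h) by (field; exact Hh0).
  unfold Rdiv. rewrite Rabs_mult, Rabs_inv.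
  apply (Rmult_lt_reg_r (Rabs h)); auto.
  rewrite Rmult_assoc, Rinv_l by lra. rewrite Rmult_1_r.
  eapply Rle_lt_trans. apply B.
  assert (C * sqrt (Rabs h) < eps).
  { pose proof (sqrt_pos (Rabs h)). unfold e1 in Hs.
    apply Rle_lt_trans with ((C+1) * sqrt (Rabs h)). nra.
    apply (Rmult_lt_reg_r (/(C+1))). apply Rinv_0_lt_compat; lra.
    replace ((C + 1) * sqrt (Rabs h) * / (C + 1)) with (sqrt (Rabs h)) by (field; lra). exact Hs. }
  nra.
Qed.

Lemma cont_from_bound F y r C : 0 < r -> 0 <= C ->
  (forall h, Rabs h < r -> Rabs (F (y + h) - F y) <= C * sqrt (Rabs h)) ->
  continuity_pt F y.
Proof.
  intros Hr HC H eps Heps.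
  set (e1 := eps / (C + 1)).
  assert (He1 : 0 < e1) by (unfold e1; apply Rdiv_lt_0_compat; lra).
  assert (Hd : 0 < Rmin r (e1 ^ 2)) by (apply Rmin_pos; nra).
  exists (Rmin r (e1 ^ 2)). split; [exact Hd|].
  intros x [_ Hx]. simpl in Hx. unfold R_dist in *.
  set (h := x - y) in *. replace x with (y + h) by (unfold h; ring).
  assert (Hh1 : Rabs h < r) by (eapply Rlt_le_trans; [apply Hx| apply Rmin_l]).
  assert (Hh2 : Rabs h < e1 ^ 2) by (eapply Rlt_le_trans; [apply Hx| apply Rmin_r]).
  assert (Hs : sqrt (Rabs h) < e1).
  { rewrite <- (sqrt_pow2 e1) by lra. apply sqrt_lt_1_alt. split; [apply Rabs_pos|exact Hh2]. }
  eapply Rle_lt_trans. apply H, Hh1.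
  pose proof (sqrt_pos (Rabs h)). unfold e1 in Hs.
  apply Rle_lt_trans with ((C+1) * sqrt (Rabs h)). nra.
  apply (Rmult_lt_reg_r (/(C+1))). apply Rinv_0_lt_compat; lra.
  replace ((C + 1) * sqrt (Rabs h) * / (C + 1)) with (sqrt (Rabs h)) by (field; lra).
  replace (eps * / (C + 1)) with (eps / (C+1)) by reflexivity. exact Hs.
Qed.
Lemma RInt_minus' (A B : R -> R) a b : ex_RInt A a b -> ex_RInt B a b -> RInt (fun v => A v - B v) a b = RInt A a b - RInt B a b.
intros. exact (RInt_minus (V:=R_CompleteNormedModule) A B a b H H0). Qed.
Lemma RInt_scal' (A : R -> R) c a b : ex_RInt A a b -> RInt (fun v => c * A v) a b = c * RInt A a b.
intros. exact (RInt_scal (V:=R_CompleteNormedModule) A a b c H). Qed.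
Lemma RInt_const' c a b : RInt (fun v => c) a b = (b - a) * c.
intros. exact (RInt_const (V:=R_CompleteNormedModule) a b c). Qed.
Lemma ex_RInt_minus' (A B : R -> R) a b : ex_RInt A a b -> ex_RInt B a b -> ex_RInt (fun v => A v - B v) a b.
intros. exact (ex_RInt_minus (V:=R_NormedModule) A B a b H H0). Qed.
Lemma ex_RInt_scal' (A : R -> R) c a b : ex_RInt A a b -> ex_RInt (fun v => c * A v) a b.
intros. exact (ex_RInt_scal (V:=R_NormedModule) A a b c H). Qed.

Section Main.
Variable t : R.
Hypothesis tpos : 0 < t.

Definition aa v := t / (4 * v * (t - v)).
Definition kk y v := if Rlt_dec 0 v then if Rlt_dec v t then exp (- (y^2 * aa v)) else 0 else 0.
Definition GG y v := if Rlt_dec 0 v then if Rlt_dec v t then y * aa v / t * exp (- (y^2 * aa v)) else 0 else 0.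
Definition HH y v := if Rlt_dec 0 v then if Rlt_dec v t then aa v / t * exp (- (y^2 * aa v)) * (1 - 2 * y^2 * aa v) else 0 else 0.

Ltac rring := match goal with |- ?a = ?b => change (@eq R a b) end; ring.
Ltac ifs := repeat (destruct Rlt_dec); try lra; try reflexivity.

Lemma out_cases v (f : R -> R) :
  ~ (0 < v < t) -> (if Rlt_dec 0 v then if Rlt_dec v t then f v else 0 else 0) = 0.
Proof. intros H. destruct Rlt_dec; [destruct Rlt_dec|]; auto. lra. Qed.

Lemma in_cases v (f : R -> R) :
  0 < v < t -> (if Rlt_dec 0 v then if Rlt_dec v t then f v else 0 else 0) = f v.
Proof. intros H. destruct Rlt_dec; [destruct Rlt_dec|]; auto; lra. Qed.

Lemma aa_q v : 0 < v < t -> aa v * (4 * v * (t - v)) = t /\ 0 < 4 * v * (t - v) /\ 0 < aa v.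
Proof.
  intros H. assert (0 < 4 * v * (t - v)) by nra. unfold aa. split; [field; nra|split; auto].
  apply Rdiv_lt_0_compat; lra.
Qed.

Lemma F1 x v : 0 <= x -> NEp x (t - v) * NEp x v = GG x v.
Proof.
  intros Hx. unfold NEp, GG.
  destruct (Rlt_dec 0 v) as [H1|H1]; [destruct (Rlt_dec v t) as [H2|H2]|].
  - destruct (Rlt_dec 0 (t - v)) as [H3|H3]; [|lra].
    replace (sqrt x / (2 * (t - v)) * exp (- x ^ 2 / (4 * (t - v))) *
      (sqrt x / (2 * v) * exp (- x ^ 2 / (4 * v))))
      with ((sqrt x * sqrt x) / (4 * v * (t - v)) * (exp (- x ^ 2 / (4 * (t - v))) * exp (- x ^ 2 / (4 * v))))
      by (field; lra).
    rewrite sqrt_sqrt by lra. rewrite <- exp_plus. unfold aa.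
    replace (- x ^ 2 / (4 * (t - v)) + - x ^ 2 / (4 * v)) with (- (x ^ 2 * (t / (4 * v * (t - v))))) by (field; lra).
    field; lra.
  - destruct (Rlt_dec 0 (t - v)); [lra|ring].
  - ring.
Qed.

Lemma ptw_basic v y : 0 < v < t ->
  let a := aa v in let q := 4 * v * (t - v) in let E := exp (- (y^2 * a)) in
  a * q = t /\ 0 < q /\ 0 < a /\ 0 < E /\ E * (1 + y^2 * a) <= 1 /\ (y^2 * a)^2 * E <= 4 /\ q <= 4 * v * t /\ q <= 4 * (t - v) * t /\ q <= t * t.
Proof.
  intros Hv a q E. destruct (aa_q v Hv) as [H1 [H2 H3]].
  assert (Hw : 0 <= y^2 * a) by (unfold a; nra).
  assert (J1 : 0 < E) by apply exp_pos.
  assert (J2 : E * (1 + y^2 * a) <= 1) by (apply e1; auto).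
  assert (J3 : (y^2 * a)^2 * E <= 4) by (apply e2; auto).
  assert (J4 : q <= 4 * v * t) by (unfold q; destruct Hv as [Hv1 Hv2]; clear - Hv1 Hv2; nra).
  assert (J5 : q <= 4 * (t - v) * t) by (unfold q; destruct Hv as [Hv1 Hv2]; clear - Hv1 Hv2;
    assert (0 < t - v) by lra; nra).
  assert (J6 : q <= t * t) by (unfold q; pose proof (pow2_ge_0 (t - 2 * v)); nra).
  exact (conj H1 (conj H2 (conj H3 (conj J1 (conj J2 (conj J3 (conj J4 (conj J5 J6)))))))).
Qed.

Lemma k_end v y : 0 < v < t -> y <> 0 ->
  Rabs (exp (- (y^2 * aa v))) <= 4 / y^2 * v /\ Rabs (exp (- (y^2 * aa v))) <= 4 / y^2 * (t - v).
Proof.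
  intros Hv Hy. destruct (ptw_basic v y Hv) as (H1 & H2 & H3 & H4 & H5 & H6 & H7 & H8 & H9).
  set (a := aa v) in *. set (q := 4 * v * (t - v)) in *. set (E := exp (- (y^2 * a))) in *.
  rewrite Rabs_right by lra.
  assert (Hy2 : 0 < y^2) by (apply pow2_gt_0; auto).
  assert (HEw : E * (y^2 * a) <= 1) by nra.
  assert (HEq : E * y^2 * t <= q).
  { replace (E * y^2 * t) with (E * (y^2 * a) * q) by (rewrite <- H1; ring). nra. }
  split; apply (Rmult_le_reg_r (y^2 * t)); try nra.
  - replace (4 / y ^ 2 * v * (y ^ 2 * t)) with (4 * v * t) by (field; lra). nra.
  - replace (4 / y ^ 2 * (t - v) * (y ^ 2 * t)) with (4 * (t - v) * t) by (field; lra). nra.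
Qed.

Lemma exp_le' x y : x <= y -> exp x <= exp y.
Proof. intros H. destruct (Rle_lt_or_eq_dec x y H). left; apply exp_increasing; auto. subst; lra. Qed.

Lemma G_end v y : 0 < v < t -> y <> 0 ->
  Rabs (y * aa v / t * exp (- (y^2 * aa v))) <= 16 / (t * Rabs y ^ 3) * v /\
  Rabs (y * aa v / t * exp (- (y^2 * aa v))) <= 16 / (t * Rabs y ^ 3) * (t - v).
Proof.
  intros Hv Hy. destruct (ptw_basic v y Hv) as (H1 & H2 & H3 & H4 & H5 & H6 & H7 & H8 & H9).
  set (a := aa v) in *. set (q := 4 * v * (t - v)) in *. set (E := exp (- (y^2 * a))) in *.
  assert (HY : 0 < Rabs y) by (apply Rabs_pos_lt; auto).
  assert (Hy2 : y^2 = Rabs y ^ 2) by (rewrite pow2_abs; auto).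
  set (Y := Rabs y) in *.
  assert (Hk : (Y^2)^2 * a * E * t <= 4 * q).
  { replace ((Y^2)^2 * a * E * t) with ((Y^2 * a)^2 * E * q) by (rewrite <- H1; ring).
    rewrite <- Hy2. nra. }
  assert (HA : Rabs (y * a / t * E) = Y * a * E / t).
  { unfold Rdiv. rewrite !Rabs_mult. unfold Y. rewrite (Rabs_right a), (Rabs_right E), (Rabs_right (/ t)). ring.
    apply Rle_ge, Rlt_le, Rinv_0_lt_compat; lra. lra. lra. }
  rewrite HA.
  assert (HY3 : 0 < t * Y^3) by (apply Rmult_lt_0_compat; [lra| apply pow_lt; lra]).
  assert (K1 : (Y^2)^2 * a * E <= 4 * v * 4).
  { apply (Rmult_le_reg_r t); [lra|]. nra. }
  assert (K2 : (Y^2)^2 * a * E <= 4 * (t - v) * 4).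
  { apply (Rmult_le_reg_r t); [lra|]. nra. }
  split; apply (Rmult_le_reg_r (t * Y^3)); auto.
  - replace (Y * a * E / t * (t * Y ^ 3)) with ((Y^2)^2 * a * E) by (field; lra).
    replace (16 / (t * Y ^ 3) * v * (t * Y ^ 3)) with (4 * v * 4) by (field; lra). exact K1.
  - replace (Y * a * E / t * (t * Y ^ 3)) with ((Y^2)^2 * a * E) by (field; lra).
    replace (16 / (t * Y ^ 3) * (t - v) * (t * Y ^ 3)) with (4 * (t - v) * 4) by (field; lra). exact K2.
Qed.

Lemma H_bd v y : 0 < v < t -> y <> 0 ->
  Rabs (aa v / t * exp (- (y^2 * aa v)) * (1 - 2 * y^2 * aa v)) <= 9 / (t * y^2).
Proof.
  intros Hv Hy. destruct (ptw_basic v y Hv) as (H1 & H2 & H3 & H4 & H5 & H6 & H7 & H8 & H9).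
  set (a := aa v) in *. set (q := 4 * v * (t - v)) in *. set (E := exp (- (y^2 * a))) in *.
  assert (Hy2 : 0 < y^2) by (apply pow2_gt_0; auto).
  set (w := y^2 * a) in *.
  assert (Hw : 0 <= w) by (unfold w; nra).
  assert (HwE : w * E <= 1) by nra.
  assert (Hb : Rabs (a / t * E * (1 - 2 * w)) <= a / t * E * (1 + 2 * w)).
  { rewrite Rabs_mult. rewrite (Rabs_right (a / t * E)).
    2:{ apply Rle_ge. apply Rmult_le_pos; [apply Rlt_le, Rdiv_lt_0_compat|]; lra. }
    apply Rmult_le_compat_l. apply Rmult_le_pos; [apply Rlt_le, Rdiv_lt_0_compat|]; lra.
    unfold Rabs; destruct Rcase_abs; lra. }
  replace (1 - 2 * y ^ 2 * a) with (1 - 2 * w) by (unfold w; ring).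
  eapply Rle_trans. apply Hb.
  apply (Rmult_le_reg_r (t * y^2)). nra.
  replace (a / t * E * (1 + 2 * w) * (t * y ^ 2)) with (w * E + 2 * (w^2 * E)) by (unfold w; field; lra).
  replace (9 / (t * y ^ 2) * (t * y ^ 2)) with 9 by (field; lra). lra.
Qed.

Lemma G_dom v y : 0 < v < t ->
  Rabs (y * aa v / t * exp (- (y^2 * aa v))) <= Rabs y * (1 / (4 * v * (t - v) + y^2 * t)).
Proof.
  intros Hv. destruct (ptw_basic v y Hv) as (H1 & H2 & H3 & H4 & H5 & H6 & H7 & H8 & H9).
  set (a := aa v) in *. set (q := 4 * v * (t - v)) in *. set (E := exp (- (y^2 * a))) in *.
  assert (Hy2 : 0 <= y^2) by apply pow2_ge_0.
  assert (HA : Rabs (y * a / t * E) = Rabs y * (a * E / t)).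
  { unfold Rdiv. rewrite !Rabs_mult. rewrite (Rabs_right a), (Rabs_right E), (Rabs_right (/ t)). ring.
    apply Rle_ge, Rlt_le, Rinv_0_lt_compat; lra. lra. lra. }
  rewrite HA. apply Rmult_le_compat_l. apply Rabs_pos.
  assert (Hd : 0 < q + y^2 * t) by nra.
  apply (Rmult_le_reg_r (t * (q + y^2 * t))). nra.
  replace (1 / (q + y ^ 2 * t) * (t * (q + y ^ 2 * t))) with t by (field; lra).
  replace (a * E / t * (t * (q + y ^ 2 * t))) with (E * (a * q) + t * E * (y^2 * a)) by (field; lra).
  rewrite H1. nra.
Qed.

Lemma k_dom v y : 0 < v < t ->
  0 <= 1 - exp (- (y^2 * aa v)) <= 2 * y^2 * t * (1 / (4 * v * (t - v) + y^2 * t)).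
Proof.
  intros Hv. destruct (ptw_basic v y Hv) as (H1 & H2 & H3 & H4 & H5 & H6 & H7 & H8 & H9).
  set (a := aa v) in *. set (q := 4 * v * (t - v)) in *. set (E := exp (- (y^2 * a))) in *.
  assert (Hy2 : 0 <= y^2) by apply pow2_ge_0.
  set (w := y^2 * a) in *.
  assert (Hw : 0 <= w) by (unfold w; nra).
  assert (HE1 : 1 - w <= E) by (pose proof (exp_ineq1_le (- w)); unfold E; lra).
  assert (Hd : 0 < q + y^2 * t) by nra.
  split. { nra. }
  assert (Key : (1 - E) * (1 + w) <= 2 * w).
  { destruct (Rle_lt_dec w 1); nra. }
  apply (Rmult_le_reg_r (a * (q + y^2 * t))). nra.
  replace (2 * y ^ 2 * t * (1 / (q + y ^ 2 * t)) * (a * (q + y ^ 2 * t))) with (2 * w * t) by (unfold w; field; lra).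
  replace ((1 - E) * (a * (q + y ^ 2 * t))) with ((1 - E) * (a * q + w * t)) by (unfold w; ring).
  rewrite H1. nra.
Qed.

Lemma k_top v : 0 < v < t -> 0 <= exp (- (1^2 * aa v)) <= exp (- (1 / t)).
Proof.
  intros Hv. destruct (ptw_basic v 1 Hv) as (H1 & H2 & H3 & H4 & H5 & H6 & H7 & H8 & H9).
  split; [lra|]. apply exp_le'.
  assert (1 / t <= aa v).
  { apply (Rmult_le_reg_r (t * t)). nra. replace (1 / t * (t * t)) with t by (field; lra).
    rewrite <- H1 at 1. apply Rmult_le_compat_l; lra. }
  lra.
Qed.

Lemma cont_ends (f : R -> R) K : 0 <= K -> (forall v, ~ (0 < v < t) -> f v = 0) ->
  (forall v, 0 < v < t -> Rabs (f v) <= K * v /\ Rabs (f v) <= K * (t - v)) ->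
  continuity_pt f 0 /\ continuity_pt f t.
Proof.
  intros HK H0 H1.
  assert (F0 : f 0 = 0) by (apply H0; lra).
  assert (Ft : f t = 0) by (apply H0; lra).
  split; intros eps Heps; exists (Rmin t (eps / (K + 1))); split;
    try (apply Rmin_pos; [lra| apply Rdiv_lt_0_compat; lra]);
    intros x [_ Hx]; simpl in *; unfold R_dist in *.
  - rewrite F0. destruct (Rlt_dec 0 x) as [Hp|Hp]; [destruct (Rlt_dec x t) as [Hq|Hq]|].
    + destruct (H1 x (conj Hp Hq)) as [B _]. rewrite Rminus_0_r.
      rewrite Rminus_0_r, Rabs_right in Hx by lra.
      assert (x < eps / (K+1)) by (eapply Rlt_le_trans; [apply Hx| apply Rmin_r]).
      assert (K * x <= (K+1) * x) by nra.
      assert ((K+1) * x < eps).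
      { apply (Rmult_lt_reg_r (/ (K+1))). apply Rinv_0_lt_compat; lra.
        replace ((K + 1) * x * / (K + 1)) with x by (field; lra). exact H. }
      lra.
    + rewrite H0 by lra. rewrite Rminus_0_r, Rabs_R0. lra.
    + rewrite H0 by lra. rewrite Rminus_0_r, Rabs_R0. lra.
  - rewrite Ft. destruct (Rlt_dec 0 x) as [Hp|Hp]; [destruct (Rlt_dec x t) as [Hq|Hq]|].
    + destruct (H1 x (conj Hp Hq)) as [_ B]. rewrite Rminus_0_r.
      rewrite Rabs_left in Hx by lra.
      assert (t - x < eps / (K+1)) by (pose proof (Rmin_r t (eps / (K+1))); lra).
      assert (K * (t - x) <= (K+1) * (t - x)) by nra.
      assert ((K+1) * (t - x) < eps).
      { apply (Rmult_lt_reg_r (/ (K+1))). apply Rinv_0_lt_compat; lra.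
        replace ((K + 1) * (t - x) * / (K + 1)) with (t - x) by (field; lra). exact H. }
      lra.
    + rewrite H0 by lra. rewrite Rminus_0_r, Rabs_R0. lra.
    + rewrite H0 by lra. rewrite Rminus_0_r, Rabs_R0. lra.
Qed.

Lemma cont_int (f e : R -> R) : (forall v, 0 < v < t -> f v = e v) -> (forall v, 0 < v < t -> ex_derive e v) ->
  forall v, 0 < v < t -> continuous f v.
Proof.
  intros H1 H2 v Hv.
  apply (continuous_ext_loc f e v).
  - apply (locally_interval _ v (Finite 0) (Finite t)); simpl; try lra.
    intros z Hz1 Hz2. symmetry. apply H1. lra.
  - apply (ex_derive_continuous (V:=R_NormedModule)). apply H2, Hv.
Qed.

Lemma cont_all (f e : R -> R) K : 0 <= K -> (forall v, ~ (0 < v < t) -> f v = 0) ->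
  (forall v, 0 < v < t -> f v = e v) -> (forall v, 0 < v < t -> ex_derive e v) ->
  (forall v, 0 < v < t -> Rabs (f v) <= K * v /\ Rabs (f v) <= K * (t - v)) ->
  ex_RInt f 0 t.
Proof.
  intros HK H0 H1 H2 H3. apply (ex_RInt_continuous (V:=R_CompleteNormedModule)).
  rewrite Rmin_left, Rmax_right by lra.
  intros z Hz. destruct (cont_ends f K HK H0 H3) as [C0 Ct].
  destruct (Req_dec z 0) as [->|Hz0]. apply continuity_pt_filterlim; auto.
  destruct (Req_dec z t) as [->|Hzt]. apply continuity_pt_filterlim; auto.
  apply (cont_int f e H1 H2). lra.
Qed.

Lemma kk_int y : ex_RInt (kk y) 0 t.
Proof.
  destruct (Req_dec y 0) as [->|Hy].
  - apply (ex_RInt_ext (fun _ => 1)).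
    + intros v Hv. rewrite Rmin_left, Rmax_right in Hv by lra. unfold kk. ifs.
      replace (- (0 ^ 2 * aa v)) with 0 by ring. rewrite exp_0. auto.
    + apply ex_RInt_const.
  - apply (cont_all (kk y) (fun v => exp (- (y^2 * (t / (4 * v * (t - v)))))) (4 / y^2)).
    + apply Rlt_le, Rdiv_lt_0_compat. lra. apply pow2_gt_0; auto.
    + intros v Hv. unfold kk. ifs.
    + intros v Hv. unfold kk. ifs.
    + intros v Hv. auto_derive. nra.
    + intros v Hv. unfold kk. ifs. apply k_end; auto.
Qed.

Lemma GG_int y : ex_RInt (GG y) 0 t.
Proof.
  destruct (Req_dec y 0) as [->|Hy].
  - apply (ex_RInt_ext (fun _ => 0)).
    + intros v Hv. unfold GG. ifs; try ring.
    + apply ex_RInt_const.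
  - apply (cont_all (GG y) (fun v => y * (t / (4 * v * (t - v))) / t * exp (- (y^2 * (t / (4 * v * (t - v)))))) (16 / (t * Rabs y ^ 3))).
    + apply Rlt_le, Rdiv_lt_0_compat. lra. apply Rmult_lt_0_compat; auto. apply pow_lt, Rabs_pos_lt; auto.
    + intros v Hv. unfold GG. ifs.
    + intros v Hv. unfold GG. ifs.
    + intros v Hv. auto_derive. nra.
    + intros v Hv. unfold GG. ifs. apply G_end; auto.
Qed.

Lemma Ddom c : 0 < c -> ex_RInt (fun v => 1 / (4 * v * (t - v) + c)) 0 t /\
  RInt (fun v => 1 / (4 * v * (t - v) + c)) 0 t <= (ln (2 * t ^ 2 + c) - ln c) / t.
Proof.
  intros Hc.
  set (g := fun v => 1 / (2 * t * v + c) + 1 / (2 * t * (t - v) + c)).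
  set (P := fun v => (ln (2 * t * v + c) - ln (2 * t * (t - v) + c)) / (2 * t)).
  assert (ED : forall v, 0 <= v <= t -> ex_RInt (fun v => 1 / (4 * v * (t - v) + c)) 0 t).
  { intros _ _. apply (ex_RInt_continuous (V:=R_CompleteNormedModule)).
    rewrite Rmin_left, Rmax_right by lra. intros z Hz.
    apply (ex_derive_continuous (V:=R_NormedModule)). auto_derive. nra. }
  assert (Hd : forall z, 0 <= z <= t -> is_derive P z (g z)).
  { intros z Hz. unfold P, g. auto_derive.
    - split; [nra|split; [nra|auto]].
    - field. split; nra. }
  assert (Hg : forall z, 0 <= z <= t -> continuous g z).
  { intros z Hz. apply (ex_derive_continuous (V:=R_NormedModule)). unfold g. auto_derive. split; nra. }
  assert (HI : is_RInt g 0 t (minus (P t) (P 0))).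
  { apply (is_RInt_derive (V:=R_CompleteNormedModule)); rewrite Rmin_left, Rmax_right by lra; auto. }
  split. { apply (ED 0). lra. }
  apply Rle_trans with (RInt g 0 t).
  - apply RInt_le. lra. apply (ED 0); lra. eexists; exact HI.
    intros v Hv. unfold g.
    assert (A1 : 0 < 2 * t * v + c) by nra. assert (A2 : 0 < 2 * t * (t - v) + c) by nra.
    assert (A3 : 0 < 4 * v * (t - v) + c) by nra.
    assert (0 < 1 / (2 * t * v + c)) by (apply Rdiv_lt_0_compat; lra).
    assert (0 < 1 / (2 * t * (t - v) + c)) by (apply Rdiv_lt_0_compat; lra).
    destruct (Rle_lt_dec v (t / 2)).
    + assert (1 / (4 * v * (t - v) + c) <= 1 / (2 * t * v + c)).
      { apply Rmult_le_reg_r with ((4 * v * (t - v) + c) * (2 * t * v + c)). nra.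
        replace (1 / (4 * v * (t - v) + c) * ((4 * v * (t - v) + c) * (2 * t * v + c))) with (2 * t * v + c) by (field; lra).
        replace (1 / (2 * t * v + c) * ((4 * v * (t - v) + c) * (2 * t * v + c))) with (4 * v * (t - v) + c) by (field; lra).
        nra. }
      lra.
    + assert (1 / (4 * v * (t - v) + c) <= 1 / (2 * t * (t - v) + c)).
      { apply Rmult_le_reg_r with ((4 * v * (t - v) + c) * (2 * t * (t - v) + c)). nra.
        replace (1 / (4 * v * (t - v) + c) * ((4 * v * (t - v) + c) * (2 * t * (t - v) + c))) with (2 * t * (t - v) + c) by (field; lra).
        replace (1 / (2 * t * (t - v) + c) * ((4 * v * (t - v) + c) * (2 * t * (t - v) + c))) with (4 * v * (t - v) + c) by (field; lra).
        nra. }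
      lra.
  - rewrite (is_RInt_unique g 0 t _ HI). unfold minus, plus, opp; simpl. unfold P.
    replace (2 * t * t + c) with (2 * t ^ 2 + c) by ring.
    replace (2 * t * 0 + c) with c by ring. replace (2 * t * (t - t) + c) with c by ring.
    replace (2 * t * (t - 0) + c) with (2 * t ^ 2 + c) by ring.
    replace (2 * (t * (t * 1)) + c) with (2 * t ^ 2 + c) by ring. right. field. lra.
Qed.

Lemma logbound y : y <> 0 ->
  Rabs y * ((ln (2 * t ^ 2 + y ^ 2 * t) - ln (y ^ 2 * t)) / t) <= 4 * sqrt (sqrt (2 * t)) / t * sqrt (Rabs y).
Proof.
  intros Hy.
  assert (HY : 0 < Rabs y) by (apply Rabs_pos_lt; auto).
  set (r := sqrt (Rabs y)). set (s0 := sqrt (sqrt (2 * t))).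
  assert (Hr : 0 < r) by (apply sqrt_lt_R0; auto).
  assert (Hs0 : 0 < s0) by (apply sqrt_lt_R0, sqrt_lt_R0; lra).
  assert (Hr2 : r * r = Rabs y) by (apply sqrt_sqrt; lra).
  assert (Hs2 : s0 * s0 = sqrt (2 * t)) by (apply sqrt_sqrt, sqrt_pos).
  assert (Hs4 : sqrt (2 * t) * sqrt (2 * t) = 2 * t) by (apply sqrt_sqrt; lra).
  assert (Hy2 : y ^ 2 = (r * r) * (r * r)) by (rewrite Hr2, <- pow2_abs; ring).
  assert (Ht2 : 2 * t = (s0 * s0) * (s0 * s0)) by (rewrite Hs2; auto).
  assert (Hpos : 0 < y ^ 2 * t) by (rewrite Hy2; apply Rmult_lt_0_compat; [nra|lra]).
  set (u := s0 / r).
  assert (Hu : 0 < u) by (apply Rdiv_lt_0_compat; auto).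
  assert (Hq : (2 * t ^ 2 + y ^ 2 * t) / (y ^ 2 * t) = 1 + u^4).
  { transitivity (1 + 2 * t / y ^ 2).
    - field. repeat split; auto; lra.
    - rewrite Ht2, Hy2. unfold u. field. lra. }
  rewrite <- ln_div by nra. rewrite Hq.
  assert (L1 : ln (1 + u ^ 4) <= ln ((1 + u) ^ 4)).
  { apply ln_le. nra. pose proof (pow_lt u 4 Hu). nra. }
  rewrite ln_pow in L1 by lra.
  assert (L2 : ln (1 + u) <= u).
  { pose proof (exp_ineq1_le u). rewrite <- (ln_exp u) at 2. apply ln_le; lra. }
  assert (L3 : ln (1 + u ^ 4) <= 4 * u) by (simpl INR in L1; lra).
  rewrite <- Hr2.
  apply Rle_trans with (r * r * (4 * u / t)).
  { apply Rmult_le_compat_l. nra. unfold Rdiv. apply Rmult_le_compat_r. left; apply Rinv_0_lt_compat; lra. lra. }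
  unfold u. right. fold r. field. split; lra.
Qed.

Lemma dk v y : is_derive (fun z => kk z v) y (-2 * t * GG y v).
Proof.
  unfold kk, GG. destruct (Rlt_dec 0 v); [destruct (Rlt_dec v t)|].
  - auto_derive; auto. replace (y * (y * 1)) with (y ^ 2) by ring. field. lra.
  - replace (-2 * t * 0) with 0 by ring. apply (is_derive_const (K:=R_AbsRing) (V:=R_NormedModule)).
  - replace (-2 * t * 0) with 0 by ring. apply (is_derive_const (K:=R_AbsRing) (V:=R_NormedModule)).
Qed.

Lemma dG v y : is_derive (fun z => GG z v) y (HH y v).
Proof.
  unfold GG, HH. destruct (Rlt_dec 0 v); [destruct (Rlt_dec v t)|].
  - auto_derive; auto. replace (y * (y * 1)) with (y ^ 2) by ring. field. lra.
  - apply (is_derive_const (K:=R_AbsRing) (V:=R_NormedModule)).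
  - apply (is_derive_const (K:=R_AbsRing) (V:=R_NormedModule)).
Qed.

Lemma HH_bd v z : z <> 0 -> Rabs (HH z v) <= 9 / (t * z ^ 2).
Proof.
  intros Hz. assert (0 < 9 / (t * z ^ 2)).
  { apply Rdiv_lt_0_compat. lra. apply Rmult_lt_0_compat. lra. apply pow2_gt_0; auto. }
  unfold HH. destruct (Rlt_dec 0 v); [destruct (Rlt_dec v t)|].
  - apply H_bd; auto.
  - rewrite Rabs_R0; lra.
  - rewrite Rabs_R0; lra.
Qed.

Definition NC y := RInt (GG y) 0 t.
Definition Ph y := RInt (kk y) 0 t.
Definition Fm y := - Ph y / (2 * t).
Definition K1 := 4 * sqrt (sqrt (2 * t)) / t.

Lemma K1_pos : 0 <= K1.
Proof. unfold K1. apply Rmult_le_pos. apply Rmult_le_pos. lra. apply sqrt_pos. left; apply Rinv_0_lt_compat; lra. Qed.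

Lemma Dint c : 0 < c -> ex_RInt (fun v => 1 / (4 * v * (t - v) + c)) 0 t.
Proof. intros. apply (Ddom c H). Qed.

Lemma NC_small y : y <> 0 -> Rabs (NC y) <= K1 * sqrt (Rabs y).
Proof.
  intros Hy. set (D := fun v => 1 / (4 * v * (t - v) + y ^ 2 * t)).
  assert (Hc : 0 < y ^ 2 * t) by (apply Rmult_lt_0_compat; [apply pow2_gt_0; auto| lra]).
  destruct (Ddom (y ^ 2 * t) Hc) as [HD1 HD2]. fold D in HD1, HD2.
  assert (Hpt : forall v, 0 < v < t -> Rabs (GG y v) <= Rabs y * D v).
  { intros v Hv. unfold GG, D. ifs. apply G_dom; auto. }
  assert (U : NC y <= Rabs y * RInt D 0 t).
  { rewrite <- RInt_scal' by auto. apply RInt_le. lra. apply GG_int. apply ex_RInt_scal'; auto.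
    intros v Hv. pose proof (Hpt v Hv). unfold Rabs in H at 1; destruct Rcase_abs in H; lra. }
  assert (L : - (Rabs y) * RInt D 0 t <= NC y).
  { rewrite <- RInt_scal' by auto. apply RInt_le. lra. apply ex_RInt_scal'; auto. apply GG_int.
    intros v Hv. pose proof (Hpt v Hv). unfold Rabs in H at 1; destruct Rcase_abs in H; lra. }
  pose proof (logbound y Hy). fold K1 in H.
  assert (Rabs y * RInt D 0 t <= K1 * sqrt (Rabs y)).
  { eapply Rle_trans; [|apply H]. apply Rmult_le_compat_l. apply Rabs_pos. exact HD2. }
  unfold Rabs at 1. destruct Rcase_abs; lra.
Qed.

Lemma NC0 : NC 0 = 0.
Proof.
  unfold NC. rewrite (RInt_ext _ (fun _ => 0)). transitivity ((t - 0) * 0). apply RInt_const'. apply Rmult_0_r.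
  intros v _. unfold GG. ifs; try ring.
Qed.

Lemma Ph0 : Ph 0 = t.
Proof.
  unfold Ph. rewrite (RInt_ext _ (fun _ => 1)). transitivity ((t - 0) * 1). apply RInt_const'. apply (Rminus_0_r t) || (rewrite Rmult_1_r; apply Rminus_0_r).
  intros v Hv. rewrite Rmin_left, Rmax_right in Hv by lra. unfold kk. ifs.
  replace (- (0 ^ 2 * aa v)) with 0 by ring. apply exp_0.
Qed.

Lemma le_sqrt x : 0 <= x <= 1 -> x <= sqrt x.
Proof.
  intros H. pose proof (sqrt_sqrt x (proj1 H)). pose proof (sqrt_pos x).
  assert (sqrt x <= 1) by (rewrite <- sqrt_1; apply sqrt_le_1_alt; lra). nra.
Qed.

Lemma dG2 v z : is_derive (fun z => -2 * t * GG z v) z (-2 * t * HH z v).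
Proof. apply (is_derive_scal (fun z => GG z v) z (-2 * t) (HH z v)), dG. Qed.

Lemma Fm_deriv_pos y : 0 < y -> is_derive Fm y (NC y).
Proof.
  intros Hy.
  apply (deriv_from_bound Fm y (NC y) (Rmin (y / 2) 1) (36 / y ^ 2)).
  { apply Rmin_pos; lra. }
  { left. apply Rdiv_lt_0_compat. lra. apply pow2_gt_0; lra. }
  intros h Hh0 Hh.
  assert (Hh1 : Rabs h < y / 2) by (pose proof (Rmin_l (y/2) 1); lra).
  assert (Hh2 : Rabs h < 1) by (pose proof (Rmin_r (y/2) 1); lra).
  assert (Hhy : - (y / 2) < h < y / 2) by (unfold Rabs in Hh1; destruct Rcase_abs in Hh1; lra).
  assert (Hy2 : 0 < y ^ 2) by (apply pow2_gt_0; lra).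
  set (Rm := fun v => (kk (y + h) v - kk y v) - h * (-2 * t * GG y v)).
  assert (Pt : forall v, 0 <= v <= t -> Rabs (Rm v) <= 72 / y ^ 2 * h ^ 2).
  { intros v _. unfold Rm.
    pose proof (taylor2 (fun z => kk z v) (fun z => -2 * t * GG z v) (fun z => -2 * t * HH z v)
      (y / 2) (3 * y / 2) (72 / y ^ 2)) as T.
    replace (h ^ 2) with ((y + h - y) ^ 2) by ring.
    replace (kk (y + h) v - kk y v - h * (-2 * t * GG y v)) with
      (kk (y + h) v - kk y v - (y + h - y) * (-2 * t * GG y v)) by ring.
    apply T; try lra.
    - intros z _. apply dk.
    - intros z _. apply dG2.
    - intros z Hz. rewrite Rabs_mult. rewrite (Rabs_left (-2 * t)) by lra.
      assert (Hz0 : z <> 0) by lra.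
      pose proof (HH_bd v z Hz0).
      assert (Hz2 : y ^ 2 <= 4 * z ^ 2) by nra.
      assert (Hzz : 0 < z ^ 2) by (apply pow2_gt_0; lra).
      apply Rle_trans with (- (-2 * t) * (9 / (t * z ^ 2))).
      { apply Rmult_le_compat_l; lra. }
      replace (- (-2 * t) * (9 / (t * z ^ 2))) with (18 / z ^ 2) by (field; lra).
      apply (Rmult_le_reg_r (z ^ 2 * y ^ 2)). nra.
      replace (18 / z ^ 2 * (z ^ 2 * y ^ 2)) with (18 * y ^ 2) by (field; lra).
      replace (72 / y ^ 2 * (z ^ 2 * y ^ 2)) with (72 * z ^ 2) by (field; lra). nra. }
  assert (IE : RInt Rm 0 t = Ph (y + h) - Ph y - h * (-2 * t * NC y)).
  { unfold Rm, Ph, NC.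
    rewrite RInt_minus'.
    - rewrite RInt_minus' by apply kk_int.
      rewrite RInt_scal'. rewrite RInt_scal'. reflexivity. apply GG_int.
      apply ex_RInt_scal', GG_int.
    - apply ex_RInt_minus'; apply kk_int.
    - apply ex_RInt_scal', ex_RInt_scal', GG_int. }
  assert (B := abs_RInt_le_const Rm 0 t (72 / y ^ 2 * h ^ 2) (Rlt_le _ _ tpos)).
  assert (ex_RInt Rm 0 t).
  { unfold Rm. apply ex_RInt_minus'. apply ex_RInt_minus'; apply kk_int.
    apply ex_RInt_scal', ex_RInt_scal', GG_int. }
  specialize (B H Pt). rewrite IE in B.
  assert (E : Fm (y + h) - Fm y - h * NC y = - (Ph (y + h) - Ph y - h * (-2 * t * NC y)) / (2 * t)).
  { unfold Fm. field. lra. }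
  rewrite E. unfold Rdiv. rewrite Rabs_mult, Rabs_Ropp, Rabs_inv, (Rabs_right (2 * t)) by lra.
  apply Rle_trans with ((t - 0) * (72 / y ^ 2 * h ^ 2) * / (2 * t)).
  { apply Rmult_le_compat_r. left; apply Rinv_0_lt_compat; lra. exact B. }
  replace ((t - 0) * (72 / y ^ 2 * h ^ 2) * / (2 * t)) with (36 / y ^ 2 * (Rabs h * Rabs h)).
  2:{ replace (Rabs h * Rabs h) with (h ^ 2) by (rewrite <- (pow2_abs h); ring). field. lra. }
  assert (Hs : Rabs h <= sqrt (Rabs h)) by (apply le_sqrt; split; [apply Rabs_pos|lra]).
  assert (0 <= 36 * / y^2) by (left; apply Rmult_lt_0_compat; [lra|apply Rinv_0_lt_compat; lra]).
  pose proof (Rabs_pos h).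
  replace (36 / y ^ 2 * (Rabs h * Rabs h)) with (36 * / y^2 * Rabs h * Rabs h) by (unfold Rdiv; ring).
  apply Rmult_le_compat_l; [nra|exact Hs].
Qed.

Lemma Fm_deriv_0 : is_derive Fm 0 (NC 0).
Proof.
  rewrite NC0. apply (deriv_from_bound Fm 0 0 1 K1). lra. apply K1_pos.
  intros h Hh0 _. rewrite Rplus_0_l.
  assert (Hc : 0 < h ^ 2 * t) by (apply Rmult_lt_0_compat; [apply pow2_gt_0; auto| lra]).
  set (D := fun v => 1 / (4 * v * (t - v) + h ^ 2 * t)).
  destruct (Ddom (h ^ 2 * t) Hc) as [HD1 HD2]. fold D in HD1, HD2.
  set (X := (ln (2 * t ^ 2 + h ^ 2 * t) - ln (h ^ 2 * t)) / t) in *.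
  assert (IE : RInt (fun v => 1 - kk h v) 0 t = t - Ph h).
  { unfold Ph. rewrite RInt_minus'. rewrite RInt_const'. rring.
    apply ex_RInt_const. apply kk_int. }
  assert (Hint : ex_RInt (fun v => 1 - kk h v) 0 t) by (apply ex_RInt_minus'; [apply ex_RInt_const|apply kk_int]).
  assert (Lo : 0 <= t - Ph h).
  { rewrite <- IE. apply Rle_trans with (RInt (fun _ => 0) 0 t).
    - right. transitivity ((t - 0) * 0). symmetry; apply Rmult_0_r. symmetry. apply RInt_const'.
    - apply RInt_le. lra. apply ex_RInt_const. exact Hint.
      intros v Hv. unfold kk. ifs. apply k_dom; auto. }
  assert (Up : t - Ph h <= 2 * h ^ 2 * t * X).
  { rewrite <- IE. apply Rle_trans with (RInt (fun v => (2 * h ^ 2 * t) * D v) 0 t).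
    - apply RInt_le. lra. exact Hint. apply ex_RInt_scal'; auto.
      intros v Hv. unfold kk, D. ifs. apply k_dom; auto.
    - rewrite RInt_scal' by auto. apply Rmult_le_compat_l; [|exact HD2].
      pose proof (pow2_ge_0 h). nra. }
  pose proof (logbound h Hh0) as LB. fold X K1 in LB.
  unfold Fm. rewrite Ph0.
  replace (- Ph h / (2 * t) - - t / (2 * t) - h * 0) with ((t - Ph h) / (2 * t)) by (field; lra).
  rewrite Rabs_right.
  2:{ apply Rle_ge. apply Rdiv_le_0_compat; lra. }
  apply Rle_trans with (h ^ 2 * X).
  { apply (Rmult_le_reg_r (2 * t)). lra. replace ((t - Ph h) / (2 * t) * (2 * t)) with (t - Ph h) by (field; lra). lra. }
  replace (h ^ 2 * X) with (Rabs h * (Rabs h * X)) by (rewrite <- (pow2_abs h); ring).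
  replace (K1 * Rabs h * sqrt (Rabs h)) with (Rabs h * (K1 * sqrt (Rabs h))) by ring.
  apply Rmult_le_compat_l. apply Rabs_pos. exact LB.
Qed.

Lemma NC_cont y : 0 <= y -> continuous NC y.
Proof.
  intros Hy. apply continuity_pt_filterlim.
  destruct (Req_dec y 0) as [->|Hy0].
  - apply (cont_from_bound NC 0 1 K1). lra. apply K1_pos.
    intros h _. rewrite Rplus_0_l, NC0, Rminus_0_r.
    destruct (Req_dec h 0) as [->|Hh]. rewrite NC0, Rabs_R0. apply Rmult_le_pos. apply K1_pos. apply sqrt_pos.
    apply NC_small; auto.
  - assert (Hyp : 0 < y) by lra.
    assert (Hy2 : 0 < y ^ 2) by (apply pow2_gt_0; lra).
    apply (cont_from_bound NC y (Rmin (y / 2) 1) (36 / y ^ 2)).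
    { apply Rmin_pos; lra. }
    { left. apply Rdiv_lt_0_compat; lra. }
    intros h Hh.
    assert (Hh1 : Rabs h < y / 2) by (pose proof (Rmin_l (y/2) 1); lra).
    assert (Hh2 : Rabs h < 1) by (pose proof (Rmin_r (y/2) 1); lra).
    assert (Hhy : - (y / 2) < h < y / 2) by (unfold Rabs in Hh1; destruct Rcase_abs in Hh1; lra).
    assert (Pt : forall v, 0 <= v <= t -> Rabs (GG (y + h) v - GG y v) <= 36 / (t * y ^ 2) * Rabs h).
    { intros v _.
      replace (Rabs h) with (Rabs (y + h - y)) by (f_equal; ring).
      apply (lip (fun z => GG z v) (fun z => HH z v) (y / 2) (3 * y / 2)); try lra.
      - intros z _. apply dG.
      - intros z Hz. eapply Rle_trans. apply HH_bd. lra.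
        assert (Hzz : 0 < z ^ 2) by (apply pow2_gt_0; lra).
        assert (Hz2 : y ^ 2 <= 4 * z ^ 2) by nra.
        apply (Rmult_le_reg_r (t * z ^ 2 * y ^ 2)). apply Rmult_lt_0_compat; nra.
        replace (9 / (t * z ^ 2) * (t * z ^ 2 * y ^ 2)) with (9 * y ^ 2) by (field; lra).
        replace (36 / (t * y ^ 2) * (t * z ^ 2 * y ^ 2)) with (36 * z ^ 2) by (field; lra). nra. }
    assert (B := abs_RInt_le_const (fun v => GG (y + h) v - GG y v) 0 t (36 / (t * y ^ 2) * Rabs h) (Rlt_le _ _ tpos)
      (ex_RInt_minus' _ _ _ _ (GG_int (y + h)) (GG_int y)) Pt).
    unfold NC. rewrite RInt_minus' in B by apply GG_int.
    eapply Rle_trans. apply B.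
    replace ((t - 0) * (36 / (t * y ^ 2) * Rabs h)) with (36 / y ^ 2 * Rabs h) by (field; lra).
    apply Rmult_le_compat_l. left; apply Rdiv_lt_0_compat; lra.
    apply le_sqrt. split; [apply Rabs_pos|lra].
Qed.

Lemma main_t : ex_RInt NC 0 1 /\ RInt NC 0 1 = 1 / 2 - Ph 1 / (2 * t).
Proof.
  assert (HI : is_RInt NC 0 1 (minus (Fm 1) (Fm 0))).
  { apply (is_RInt_derive (V:=R_CompleteNormedModule)); rewrite Rmin_left, Rmax_right by lra.
    - intros x Hx. destruct (Req_dec x 0) as [->|Hx0]. apply Fm_deriv_0. apply Fm_deriv_pos. lra.
    - intros x Hx. apply NC_cont. lra. }
  split. { eexists; exact HI. }
  rewrite (is_RInt_unique NC 0 1 _ HI). unfold minus, plus, opp; simpl. unfold Fm. rewrite Ph0.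
  field. lra.
Qed.

Lemma Ph1_bd : Rabs (Ph 1) <= t * exp (- (1 / t)).
Proof.
  unfold Ph. eapply Rle_trans. apply (abs_RInt_le_const (kk 1) 0 t (exp (- (1 / t)))). lra. apply kk_int.
  - intros v Hv. unfold kk. destruct (Rlt_dec 0 v); [destruct (Rlt_dec v t)|].
    + pose proof (k_top v (conj r r0)). rewrite Rabs_right; lra.
    + rewrite Rabs_R0. left; apply exp_pos.
    + rewrite Rabs_R0. left; apply exp_pos.
  - lra.
Qed.
End Main.

Lemma exp_mul_pow (N : nat) x : exp (INR N * x) = exp x ^ N.
Proof.
  induction N. simpl. rewrite Rmult_0_l. apply exp_0.
  rewrite S_INR. replace ((INR N + 1) * x) with (INR N * x + x) by ring.
  rewrite exp_plus, IHN. simpl. ring.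
Qed.

Lemma exp_tail (N : nat) t : 0 < t -> exp (- (1 / t)) <= INR N ^ N * t ^ N.
Proof.
  intros Ht. destruct N as [|N'].
  - simpl. assert (0 < 1 / t) by (apply Rdiv_lt_0_compat; lra).
    assert (H1 : exp (- (1 / t)) < exp 0) by (apply exp_increasing; lra).
    rewrite exp_0 in H1. lra.
  - set (N := S N'). assert (Hn : 0 < INR N) by (apply lt_0_INR; unfold N; lia).
    set (u := 1 / (INR N * t)).
    assert (Hu : 0 < u) by (unfold u; apply Rdiv_lt_0_compat; nra).
    assert (E1 : exp (1 / t) = exp u ^ N).
    { rewrite <- exp_mul_pow. f_equal. unfold u. field. lra. }
    assert (E2 : u <= exp u) by (pose proof (exp_ineq1_le u); lra).
    assert (E3 : u ^ N <= exp (1 / t)) by (rewrite E1; apply pow_incr; lra).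
    assert (E4 : u ^ N * (INR N * t) ^ N = 1).
    { rewrite <- Rpow_mult_distr. unfold u. replace (1 / (INR N * t) * (INR N * t)) with 1 by (field; lra).
      apply pow1. }
    assert (E5 : exp (- (1 / t)) * exp (1 / t) = 1) by apply expm_mul.
    assert (0 < (INR N * t) ^ N) by (apply pow_lt; nra).
    assert (0 < u ^ N) by (apply pow_lt; lra).
    pose proof (exp_pos (- (1 / t))).
    rewrite <- Rpow_mult_distr. nra.
Qed.

Theorem proposition6p1 :
  forall N : nat,
  exists C delta : R, 0 < delta /\
    forall t : R, 0 < t < delta ->
      (forall x : R, 0 <= x <= 1 ->
         inhabited (Riemann_integrable (fun s => NEp x (t - s) * NEp x s) 0 t)) /\
      inhabited (Riemann_integrable (fun x => NEconv x t) 0 1) /\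
      Rabs (Defs.RInt (fun x => NEconv x t) 0 1 - 1 / 2) <= C * t ^ N.
Proof.
  intros N. exists (INR N ^ N / 2), 1. split; [lra|].
  intros t [Ht Ht1].
  assert (Eint : forall x, 0 <= x -> ex_RInt (fun s => NEp x (t - s) * NEp x s) 0 t).
  { intros x Hx. apply (ex_RInt_ext (GG t x)). intros v _. symmetry. apply F1; auto.
    apply GG_int; auto. }
  assert (Econv : forall x, 0 <= x -> NEconv x t = NC t x).
  { intros x Hx. unfold NEconv. rewrite RInt_bridge by (apply Eint; auto).
    unfold NC. apply RInt_ext. intros v _. apply F1; auto. }
  destruct (main_t t Ht) as [Hex Hval].
  assert (Hex2 : ex_RInt (fun x => NEconv x t) 0 1).
  { apply (ex_RInt_ext (NC t)); auto. intros x Hx. rewrite Rmin_left, Rmax_right in Hx by lra.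
    symmetry. apply Econv. lra. }
  split; [|split].
  - intros x Hx. constructor. apply ex_RInt_Reals_0. apply Eint. lra.
  - constructor. apply ex_RInt_Reals_0. exact Hex2.
  - rewrite RInt_bridge by exact Hex2.
    rewrite (RInt_ext _ (NC t)).
    2:{ intros x Hx. rewrite Rmin_left, Rmax_right in Hx by lra. apply Econv. lra. }
    rewrite Hval.
    replace (1 / 2 - Ph t 1 / (2 * t) - 1 / 2) with (- (Ph t 1 / (2 * t))) by (field; lra).
    rewrite Rabs_Ropp. unfold Rdiv. rewrite Rabs_mult, Rabs_inv, (Rabs_right (2 * t)) by lra.
    pose proof (Ph1_bd t Ht). pose proof (exp_tail N t Ht).
    apply Rle_trans with (t * exp (- (1 / t)) * / (2 * t)).
    { apply Rmult_le_compat_r. left; apply Rinv_0_lt_compat; lra. auto. }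
    replace (t * exp (- (1 / t)) * / (2 * t)) with (exp (- (1 / t)) / 2) by (field; lra).
    lra.
Qed.
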